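(* Let $c_{a,1}>0$ and $c_{c,1}>0$ be constants, let $r_{a,1}:(0,\infty)\to(0,\infty)$ be a positive, decreasing, at least twice continuously differentiable function, and let $r_{c,1}:(0,\infty)\to(0,\infty)$ be a positive, increasing, at least twice continuously differentiable function. Assume $$c_{a,1}\,r_{a,1}''(n)+c_{c,1}\,r_{c,1}''(n)>0\quad\text{for all } n\in(0,\infty),$$ and assume there exists $\bar n_1\in(0,\infty)$ such that $$c_{a,1}\,r_{a,1}'(\bar n_1)+c_{c,1}\,r_{c,1}'(\bar n_1)=0.$$ For each real budget $p\ge 2$ define $u_1:[1,p-1]\to(0,\infty)$, $u_1(n_1)=\frac{1}{p-n_1}\big(c_{a,1}r_{a,1}(n_1)+c_{c,1}r_{c,1}(n_1)\big)$, and let $n_1^*=n_1^*(p)$ be its unique global minimizer on $[1,p-1]$. Then $\bar n_1$ is unique, and for every budget $p$, $$n_1^*\le \max\{1,\bar n_1\},$$ a bound independent of $p$.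
   Context: Under the stated hypotheses, $u_1$ has a unique global minimizer on $[1,p-1]$ for every $p\ge 2$; $n_1^*$ denotes this minimizer. The functions $r_{a,1}$, $r_{c,1}$ model accuracy and evaluation-cost rates of a low-fidelity model trained with $n_1$ high-fidelity samples. *)

(* Defs.v *)
From Stdlib Require Import Reals.
From Coquelicot Require Import Coquelicot.
Open Scope R_scope.

Definition C2_pos (f : R -> R) : Prop :=
  forall x, 0 < x ->
    ex_derive f x /\ ex_derive (Derive f) x /\ continuous (Derive (Derive f)) x.

Definition pos_on_pos (f : R -> R) : Prop := forall x, 0 < x -> 0 < f x.

Definition decr_on_pos (f : R -> R) : Prop :=
  forall x y, 0 < x -> x <= y -> f y <= f x.
Definition incr_on_pos (f : R -> R) : Prop :=
  forall x y, 0 < x -> x <= y -> f x <= f y.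

Definition u1 (ca cc : R) (ra rc : R -> R) (p n : R) : R :=
  (ca * ra n + cc * rc n) / (p - n).

Definition is_global_min_u1 (ca cc : R) (ra rc : R -> R) (p n : R) : Prop :=
  1 <= n <= p - 1 /\
  forall m, 1 <= m <= p - 1 -> u1 ca cc ra rc p n <= u1 ca cc ra rc p m.

(* Main.v *)
Require Import Defs.
From Stdlib Require Import Reals Lra.
From Coquelicot Require Import Coquelicot.
Open Scope R_scope.

Lemma mvt_pos (f df : R -> R) a b : 0 < a -> a < b ->
  (forall x, 0 < x -> is_derive f x (df x)) ->
  exists c, a <= c <= b /\ f b - f a = df c * (b - a).
Proof.
  intros Ha Hab Hd.
  destruct (MVT_gen f a b df) as [c [Hc E]].
  - intros x Hx. apply Hd. rewrite Rmin_left in Hx; lra.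
  - intros x Hx. apply continuity_pt_filterlim.
    apply (ex_derive_continuous (K:=R_AbsRing) (V:=R_NormedModule)). exists (df x). apply Hd.
    rewrite Rmin_left in Hx; lra.
  - exists c. rewrite Rmin_left, Rmax_right in Hc by lra. split; auto.
Qed.

Theorem proposition2 (ca cc : R) (ra rc : R -> R) (nbar : R) :
  0 < ca -> 0 < cc ->
  pos_on_pos ra -> decr_on_pos ra -> C2_pos ra ->
  pos_on_pos rc -> incr_on_pos rc -> C2_pos rc ->
  (forall n, 0 < n ->
     ca * Derive (Derive ra) n + cc * Derive (Derive rc) n > 0) ->
  0 < nbar ->
  ca * Derive ra nbar + cc * Derive rc nbar = 0 ->
  (forall m, 0 < m -> ca * Derive ra m + cc * Derive rc m = 0 -> m = nbar) /\
  (forall p nstar, 2 <= p ->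
     is_global_min_u1 ca cc ra rc p nstar ->
     nstar <= Rmax 1 nbar).
Proof.
  intros Hca Hcc Pa Da Ca Pc Ic Cc H2 Hnb Hz.
  set (G1 := fun x => ca * Derive ra x + cc * Derive rc x).
  set (G2 := fun x => ca * Derive (Derive ra) x + cc * Derive (Derive rc) x).
  set (g := fun x => ca * ra x + cc * rc x).
  assert (dG1 : forall x, 0 < x -> is_derive G1 x (G2 x)).
  { intros x Hx. unfold G1, G2.
    destruct (Ca x Hx) as [_ [Ea _]]. destruct (Cc x Hx) as [_ [Ec _]].
    apply (is_derive_plus (fun y => ca * Derive ra y) (fun y => cc * Derive rc y));
      apply is_derive_scal; apply Derive_correct; auto. }
  assert (dg : forall x, 0 < x -> is_derive g x (G1 x)).
  { intros x Hx. unfold G1, g.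
    destruct (Ca x Hx) as [Ea _]. destruct (Cc x Hx) as [Ec _].
    apply (is_derive_plus (fun y => ca * ra y) (fun y => cc * rc y));
      apply is_derive_scal; apply Derive_correct; auto. }
  assert (mono : forall a b, 0 < a -> a < b -> G1 a < G1 b).
  { intros a b Ha Hab. destruct (mvt_pos G1 G2 a b Ha Hab dG1) as [c [Hc E]].
    assert (G2 c > 0) by (apply H2; lra).
    assert (G2 c * (b - a) > 0) by (apply Rmult_gt_0_compat; lra). lra. }
  assert (Z : G1 nbar = 0) by exact Hz.
  split.
  - intros m Hm Em. change (G1 m = 0) in Em.
    destruct (Rtotal_order m nbar) as [h|[h|h]]; auto.
    + pose proof (mono m nbar Hm h). lra.
    + pose proof (mono nbar m Hnb h). lra.
  - intros p nstar Hp [[H1 H3] Hmin].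
    destruct (Rle_or_lt nstar (Rmax 1 nbar)) as [h|h]; auto.
    exfalso. set (m := Rmax 1 nbar) in *.
    assert (Hm1 : 1 <= m) by apply Rmax_l.
    assert (Hm2 : nbar <= m) by apply Rmax_r.
    specialize (Hmin m ltac:(lra)).
    destruct (mvt_pos g G1 m nstar ltac:(lra) h dg) as [c [Hc E]].
    assert (G1 c >= 0).
    { destruct (Req_dec c nbar) as [e|e]. subst c; lra.
      pose proof (mono nbar c Hnb ltac:(lra)). lra. }
    assert (G1 c * (nstar - m) >= 0).
    { apply Rle_ge, Rmult_le_pos; lra. }
    assert (gm : 0 < g m).
    { unfold g. pose proof (Pa m ltac:(lra)). pose proof (Pc m ltac:(lra)).
      pose proof (Rmult_lt_0_compat ca (ra m) Hca H4).
      pose proof (Rmult_lt_0_compat cc (rc m) Hcc H5). lra. }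
    unfold u1 in Hmin. fold (g nstar) (g m) in Hmin.
    assert (g m / (p - m) < g nstar / (p - nstar)).
    { apply Rlt_le_trans with (g m / (p - nstar)).
      - unfold Rdiv. apply Rmult_lt_compat_l; auto.
        apply Rinv_lt_contravar; try lra. apply Rmult_lt_0_compat; lra.
      - unfold Rdiv. apply Rmult_le_compat_r.
        + left. apply Rinv_0_lt_compat. lra.
        + lra. }
    lra.
Qed.
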